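(* Let $n\ge1$. The number of symmetric Brauer diagrams on $2n$ strands equals $a_{2n}$, where $a_0=a_1=1$ and $a_m=a_{m-1}+2(m-1)a_{m-2}$ for $m>1$. Consequently, $\mathrm{SBr}(\mathrm{A}_{2n-1})$ is a $\mathbb{Z}[\delta^{\pm1}]$-subalgebra of $\mathrm{Br}(\mathrm{A}_{2n-1})$, free over $\mathbb{Z}[\delta^{\pm1}]$ of rank $a_{2n}$.
   Context: $\mathrm{Br}(\mathrm{A}_{2n-1})$ denotes the classical Brauer algebra on $2n$ strands over $\mathbb{Z}[\delta^{\pm1}]$: it is free with basis the Brauer diagrams, i.e. perfect matchings of the $4n$ dots $(j,1),(j,0)$, $1\le j\le 2n$, with multiplication by concatenation where each closed loop formed is replaced by a factor $\delta$. A Brauer diagram is symmetric if it is invariant under the reflection $(j,\epsilon)\mapsto(2n+1-j,\epsilon)$ of the dots. $\mathrm{SBr}(\mathrm{A}_{2n-1})$ is the $\mathbb{Z}[\delta^{\pm1}]$-linear span of the symmetric Brauer diagrams. *)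

(* Defs.v *)
From HB Require Import structures.
From mathcomp Require Import all_boot all_order all_algebra.
Set Implicit Arguments. Unset Strict Implicit. Unset Printing Implicit Defensive.
Import GRing.Theory.

(* Dots on N strands: (j, eps) with j : 'I_N (0-based, j = 0 is strand 1)
   and eps = true for the top row (j,1), false for the bottom row (j,0). *)
Definition dot (N : nat) := ('I_N * bool)%type.

(* A raw map on dots; Brauer diagrams are those that are perfect matchings,
   i.e. fixed-point-free involutions (x is matched with d x). *)
Definition diagram (N : nat) := {ffun dot N -> dot N}.

Definition is_brauer N (d : diagram N) : bool :=
  [forall x, (d (d x) == x) && (d x != x)].

(* The reflection (j, eps) |-> (N+1-j, eps) (1-based), i.e. rev_ord. *)
Definition refl_dot N (x : dot N) : dot N := (rev_ord x.1, x.2).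

Definition is_symmetric N (d : diagram N) : bool :=
  [forall x, d (refl_dot x) == refl_dot (d x)].

Definition is_sym_brauer N (d : diagram N) := is_brauer d && is_symmetric d.

Fixpoint a (m : nat) : nat :=
  match m with
  | 0 | 1 => 1
  | S ((S p) as q) => a q + 2 * q * a p
  end.

(* Concatenation d1 . d2 : d1 on top of d2; bottom dot (k,0) of d1 is
   identified with top dot (k,1) of d2.  The top row of the result is the
   top row of d1, the bottom row is the bottom row of d2. *)
(* walk N d1 d2 fuel y : y is a dot of d1 just reached; follow the strand. *)
Fixpoint walk N (d1 d2 : diagram N) (fuel : nat) (y : dot N) : dot N :=
  if y.2 then y
  else match fuel with
       | 0 => y
       | S f => let z := d2 (y.1, true) in
                if ~~ z.2 then z else walk d1 d2 f (d1 (z.1, false))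
       end.

Definition conc N (d1 d2 : diagram N) : diagram N :=
  [ffun x : dot N =>
     if x.2 then walk d1 d2 N.+1 (d1 x)
     else let z := d2 x in
          if ~~ z.2 then z else walk d1 d2 N.+1 (d1 (z.1, false))].

(* Closed loops: components of the middle row (identified points k) which
   contain no point connected to the top of d1 or the bottom of d2. *)
Definition mid_rel N (d1 d2 : diagram N) : rel 'I_N :=
  fun k k' => (d1 (k, false) == (k', false)) || (d2 (k, true) == (k', true)).

Definition mid_open N (d1 d2 : diagram N) (k : 'I_N) : bool :=
  (d1 (k, false)).2 || ~~ (d2 (k, true)).2.

Definition loops N (d1 d2 : diagram N) : nat :=
  #|[set k : 'I_N | (fingraph.root (mid_rel d1 d2) k == k) &&
        [forall k', connect (mid_rel d1 d2) k k' ==> ~~ mid_open d1 d2 k']]|.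

(* Elements of Br(A_{N-1}) over R: coefficient functions on diagrams,
   supported on Brauer diagrams (the basis). *)
Notation elt R N := {ffun diagram N -> (GRing.ComUnitRing.sort R)^o}.

Definition inBr (R : comUnitRingType) N (f : elt R N) : bool :=
  [forall d, (f d != 0%R) ==> is_brauer d].

Definition inSBr (R : comUnitRingType) N (f : elt R N) : bool :=
  [forall d, (f d != 0%R) ==> is_sym_brauer d].

Definition bmul (R : comUnitRingType) (delta : R) N (f g : elt R N) : elt R N :=
  [ffun d => (\sum_(d1 | is_brauer d1) \sum_(d2 | is_brauer d2)
      (conc d1 d2 == d)%:R * (f d1 * g d2) * delta ^+ loops d1 d2)%R].

Definition id_diag N : diagram N := [ffun x : dot N => (x.1, ~~ x.2)].

Definition bone (R : comUnitRingType) N : elt R N :=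
  [ffun d => ((d == id_diag N)%:R)%R].

(* Main.v *)
Require Import Defs.
From HB Require Import structures.
From mathcomp Require Import all_boot all_order all_algebra.
From mathcomp Require Import zify.
Import GRing.Theory.
Set Implicit Arguments. Unset Strict Implicit. Unset Printing Implicit Defensive.

Fixpoint itp (A : eqType) (h E : A -> A) (f : nat) (a : A) : A :=
  if E a == a then a else match f with 0 => a | S f => itp h E f (h a) end.

Lemma itp_mono (A : eqType) (h E : A -> A) f g a :
  E (itp h E f a) = itp h E f a -> f <= g -> itp h E g a = itp h E f a.
Proof.
elim: f g a => [|f IH] [|g] a /=; case: eqP => //.
rewrite ltnS => _ H1 H2; exact: IH.
Qed.

Lemma itp_iter (A : eqType) (h E : A -> A) f a t :
  (forall j, j < t -> E (iter j h a) != iter j h a) ->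
  E (iter t h a) = iter t h a -> t <= f -> itp h E f a = iter t h a.
Proof.
elim: t f a => [|t IH] f a Hj Ht Hf.
- by case: f {Hf} => /= [|f]; rewrite Ht eqxx.
- case: f Hf => // f Hf /=.
  rewrite (negbTE (Hj 0 isT)) /=.
  rewrite -iterS iterSr; apply: IH.
  + move=> j Hjt; rewrite -iterSr; exact: Hj.
  + by rewrite -iterSr.
  + exact: Hf.
Qed.

Lemma iter_inj_aux (A : finType) (D E : A -> A) (DD : involutive D) (EE : involutive E) e m :
  E e = e ->
  (forall j, j < m -> E (iter j (D \o E) (D e)) != iter j (D \o E) (D e)) ->
  forall i j, i < j < m -> iter i (D \o E) (D e) != iter j (D \o E) (D e).
Proof.
move=> He Hm; elim=> [|i IH] [|j] //=.
- move=> Hjm; apply/eqP => /(can_inj DD) H.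
  have H2 : iter j (D \o E) (D e) = e by rewrite -[iter _ _ _]EE -H He.
  by have := Hm j (ltnW Hjm); rewrite H2 He eqxx.
- rewrite ltnS => /andP[Hij Hjm]; apply/negP => /eqP H.
  have H' : iter i (D \o E) (D e) = iter j (D \o E) (D e).
    by move: H => /= /(can_inj DD) /(can_inj EE).
  by move: (IH j); rewrite Hij (ltnW Hjm) /= H' eqxx => /(_ isT).
Qed.

Lemma iter_bound (A : finType) (D E : A -> A) (DD : involutive D) (EE : involutive E) e m :
  E e = e ->
  (forall j, j < m -> E (iter j (D \o E) (D e)) != iter j (D \o E) (D e)) ->
  m <= #|[pred a | E a != a]|.
Proof.
move=> He Hm.
pose g (i : 'I_m) := iter i (D \o E) (D e).
have gi : injective g.
  move=> i j; rewrite /g => H; apply/val_inj/eqP.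
  case: (ltngtP i j) => // Hij.
  - by move: (@iter_inj_aux A D E DD EE e m He Hm i j); rewrite Hij ltn_ord /= H eqxx => /(_ isT).
  - by move: (@iter_inj_aux A D E DD EE e m He Hm j i); rewrite Hij ltn_ord /= H eqxx => /(_ isT).
rewrite -[m]card_ord -(card_image gi); apply: subset_leq_card.
apply/subsetP => _ /imageP[i _ ->]; rewrite inE; exact: Hm.
Qed.

Lemma path_exists (A : finType) (D E : A -> A) (DD : involutive D) (EE : involutive E) e :
  E e = e ->
  exists t, [/\ t <= #|[pred a | E a != a]|,
     (forall j, j < t -> E (iter j (D \o E) (D e)) != iter j (D \o E) (D e)) &
     E (iter t (D \o E) (D e)) = iter t (D \o E) (D e)].
Proof.
move=> He; set K := #|_|.
pose P t := E (iter t (D \o E) (D e)) == iter t (D \o E) (D e).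
have exP : exists t, P t.
  case: (boolP [exists t : 'I_K.+1, P t]) => [/existsP[t Ht]|H]; first by exists t.
  have : K.+1 <= K.
    apply: (iter_bound DD EE He) => j Hj.
    by move/existsPn: H => /(_ (Ordinal Hj)).
  by rewrite ltnn.
case: (ex_minnP exP) => t Pt Hmin.
have Hlt : forall j, j < t -> ~~ P j.
  move=> j Hj; apply/negP => Pj; have := Hmin j Pj; by rewrite leqNgt Hj.
exists t; split => //; last exact/eqP.
exact: (iter_bound DD EE He).
Qed.

Lemma path_rev (A : finType) (D E : A -> A) (DD : involutive D) (EE : involutive E) e t :
  forall i, i <= t ->
  iter i (D \o E) (D (iter t (D \o E) (D e))) = D (iter (t - i) (D \o E) (D e)).
Proof.
elim=> [|i IH] Hi; first by rewrite subn0.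
rewrite iterS IH ?(ltnW Hi) //.
have -> : t - i = (t - i.+1).+1 by lia.
by rewrite iterS /= !DD EE.
Qed.

Definition Phi (A : finType) (D E : A -> A) (e : A) : A :=
  itp (D \o E) E #|[pred a | E a != a]| (D e).

Lemma Phi_props (A : finType) (D E : A -> A) (DD : involutive D) (EE : involutive E)
  (Dfp : forall a, D a != a) e :
  E e = e ->
  [/\ E (Phi D E e) = Phi D E e,
      forall g, #|[pred a | E a != a]| <= g -> itp (D \o E) E g (D e) = Phi D E e,
      Phi D E (Phi D E e) = e & Phi D E e != e].
Proof.
move=> He; have [t [HtK Hj Ht]] := path_exists DD EE He.
have Hg : forall g, t <= g -> itp (D \o E) E g (D e) = iter t (D \o E) (D e).
  move=> g Hg; exact: itp_iter.
have HP : Phi D E e = iter t (D \o E) (D e) by apply: Hg.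
have Hrev := path_rev DD EE e (t:=t).
split.
- by rewrite HP.
- by move=> g Hgg; rewrite HP; apply: Hg; apply: leq_trans Hgg.
- rewrite HP /Phi; rewrite (@itp_iter _ _ _ _ _ t).
  + by rewrite Hrev // subnn /= DD.
  + move=> j Hjt; rewrite Hrev ?(ltnW Hjt) //.
    have -> : t - j = (t - j.+1).+1 by lia.
    rewrite iterS /= DD EE; apply: contra (Hj (t - j.+1) _); last by lia.
    by rewrite eq_sym.
  + by rewrite Hrev // subnn /= DD.
  + exact: HtK.
- rewrite HP; apply/eqP => Hte.
  have Hs : forall i, i <= t -> iter i (D \o E) (D e) = D (iter (t - i) (D \o E) (D e)).
    by move=> i Hi; rewrite -Hrev // Hte.
  move: (odd_double_half t); case: (odd t) => /= Htk.
  + set k := t./2 in Htk.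
    have H1 := Hs k.+1 (ltac:(lia)).
    rewrite (_ : t - k.+1 = k) in H1; last by lia.
    rewrite iterS /= in H1; move/(can_inj DD): H1 => H1.
    by have := Hj k (ltac:(lia)); rewrite H1 eqxx.
  + set k := t./2 in Htk.
    have H1 := Hs k (ltac:(lia)).
    rewrite (_ : t - k = k) in H1; last by lia.
    by have := Dfp (iter k (D \o E) (D e)); rewrite -H1 eqxx.
Qed.

Definition Dm N (d1 d2 : diagram N) (a : dot N + dot N) : dot N + dot N :=
  match a with inl x => inl (d1 x) | inr x => inr (d2 x) end.
Definition Em N (a : dot N + dot N) : dot N + dot N :=
  match a with
  | inl x => if x.2 then inl x else inr (x.1, true)
  | inr x => if x.2 then inl (x.1, false) else inr x end.
Definition outm N (a : dot N + dot N) : dot N :=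
  match a with inl x => x | inr x => x end.
Definition embm N (x : dot N) : dot N + dot N := if x.2 then inl x else inr x.

Lemma walk_itp N (d1 d2 : diagram N) f y :
  walk d1 d2 f y = outm (itp (Dm d1 d2 \o (@Em N)) (@Em N) f.*2 (inl y)).
Proof.
elim: f y => [|f IH] [k [|]] /=; rewrite ?eqxx //.
case: (d2 (k, true)) => kz [|] /=; rewrite ?eqxx //.
Qed.

Lemma Em_inv N : involutive (@Em N).
Proof. by case=> [[k [|]]|[k [|]]]. Qed.

Lemma brauer_inv N (d : diagram N) : is_brauer d -> involutive d /\ forall x, d x != x.
Proof.
move/forallP=> H; split=> x; by have /andP[/eqP ? ?] := H x.
Qed.

Lemma Dm_inv N (d1 d2 : diagram N) : is_brauer d1 -> is_brauer d2 ->
  involutive (Dm d1 d2) /\ forall a, Dm d1 d2 a != a.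
Proof.
move=> /brauer_inv[i1 f1] /brauer_inv[i2 f2]; split.
- by case=> x /=; rewrite ?i1 ?i2.
- case=> x /=; apply/eqP => -[] /eqP; by rewrite ?(negbTE (f1 x)) ?(negbTE (f2 x)).
Qed.

Lemma K_bound N : #|[pred a : dot N + dot N | Em a != a]| <= N.*2.
Proof.
pose g (u : 'I_N + 'I_N) : dot N + dot N :=
  match u with inl k => inl (k, false) | inr k => inr (k, true) end.
have gi : injective g by case=> k [] // k' /= [->].
have -> : N.*2 = #|{: ('I_N + 'I_N)%type}| by rewrite card_sum card_ord addnn.
rewrite -(card_image gi); apply: subset_leq_card; apply/subsetP.
case=> [[k [|]]|[k [|]]]; rewrite inE //= ?eqxx //= => _.
- by apply/imageP; exists (inl k).
- by apply/imageP; exists (inr k).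
Qed.

Lemma itpS (A : eqType) (h E : A -> A) f a :
  itp h E f.+1 a = if E a == a then a else itp h E f (h a).
Proof. by []. Qed.

Lemma conc_Phi N (d1 d2 : diagram N) : is_brauer d1 -> is_brauer d2 ->
  forall x, conc d1 d2 x = outm (Phi (Dm d1 d2) (@Em N) (embm x)).
Proof.
move=> b1 b2; have [Di Df] := Dm_inv b1 b2.
have Kb := K_bound N.
move=> [k b].
have He : Em (embm (k, b)) = embm (k, b) by case: b.
have [_ Hg _ _] := Phi_props Di (@Em_inv N) Df He.
case: b He Hg => He Hg.
- transitivity (walk d1 d2 N.+1 (d1 (k, true))); first by rewrite ffunE.
  rewrite walk_itp Hg //; apply: (leq_trans Kb); rewrite !doubleS; lia.
- rewrite -(Hg (N.+1).*2.+1); last by apply: (leq_trans Kb); rewrite !doubleS; lia.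
  have -> : Dm d1 d2 (embm (k, false)) = inr (d2 (k, false)) by [].
  rewrite ffunE itpS.
  case: (d2 (k, false)) => kz [|]; cbn -[walk itp outm].
  + by rewrite walk_itp.
  + by rewrite eqnE eqxx.
Qed.

Lemma conc_brauer N (d1 d2 : diagram N) : is_brauer d1 -> is_brauer d2 ->
  is_brauer (conc d1 d2).
Proof.
move=> b1 b2; have [Di Df] := Dm_inv b1 b2.
have emb_out : forall a : dot N + dot N, Em a = a -> embm (outm a) = a.
  by case=> [[k [|]]|[k [|]]] //= H; discriminate H.
apply/forallP => x.
have He : Em (embm x) = embm x by case: x => k [].
have [He' _ HPP Hne] := Phi_props Di (@Em_inv N) Df He.
rewrite !conc_Phi // emb_out // HPP.
have -> : outm (embm x) = x by rewrite /embm; case: ifP.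
rewrite eqxx /=; apply: contra Hne => /eqP H.
by rewrite -(emb_out _ He') H.
Qed.

Lemma sym_eq N (d : diagram N) : is_symmetric d -> forall x, d (refl_dot x) = refl_dot (d x).
Proof. by move/forallP => H x; apply/eqP. Qed.

Lemma walk_refl N (d1 d2 : diagram N) : is_symmetric d1 -> is_symmetric d2 ->
  forall f y, walk d1 d2 f (refl_dot y) = refl_dot (walk d1 d2 f y).
Proof.
move=> /sym_eq s1 /sym_eq s2; elim=> [|f IH] [k [|]] //=.
have -> : (rev_ord k, true) = refl_dot (k, true) by [].
rewrite s2; case: (d2 (k, true)) => kz [|] //=.
have -> : (rev_ord kz, false) = refl_dot (kz, false) by [].
by rewrite s1 IH.
Qed.

Arguments walk : simpl never.

Lemma conc_sym N (d1 d2 : diagram N) : is_symmetric d1 -> is_symmetric d2 ->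
  is_symmetric (conc d1 d2).
Proof.
move=> h1 h2; have s1 := sym_eq h1; have s2 := sym_eq h2.
apply/forallP => -[k [|]]; apply/eqP; rewrite !ffunE /=.
- by rewrite s1 walk_refl.
- rewrite s2; case: (d2 (k, false)) => kz [|] //=.
  have -> : (rev_ord kz, false) = refl_dot (kz, false) by [].
  by rewrite s1 walk_refl.
Qed.

Lemma conc_sym_brauer N (d1 d2 : diagram N) : is_sym_brauer d1 -> is_sym_brauer d2 ->
  is_sym_brauer (conc d1 d2).
Proof.
move=> /andP[b1 s1] /andP[b2 s2]; apply/andP; split.
- exact: conc_brauer.
- exact: conc_sym.
Qed.

Definition good (T : finType) (s : T -> T) (S : {set T}) (d : {ffun T -> T}) : bool :=
  [forall z, if z \in S then [&& d z \in S, d (d z) == z, d z != z & d (s z) == s (d z)]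
             else d z == z].

Definition FS (T : finType) (s : T -> T) (S : {set T}) := [set d | good s S d].

Definition Qs (T : finType) (s : T -> T) (x y : T) : {set T} :=
  x |: (s x |: (y |: [set s y])).

Definition pm (T : finType) (s : T -> T) (x y : T) : {ffun T -> T} :=
  [ffun z => if z == x then y else if z == y then x else if z == s x then s y else s x].

Definition glue (T : finType) (Q : {set T}) (p d : {ffun T -> T}) : {ffun T -> T} :=
  [ffun z => if z \in Q then p z else d z].

Lemma goodP (T : finType) (s : T -> T) (S : {set T}) (d : {ffun T -> T}) :
  reflect (forall z, if z \in S then [/\ d z \in S, d (d z) = z, d z != z & d (s z) = s (d z)]
             else d z = z) (good s S d).
Proof.
apply: (iffP forallP) => H z; move: (H z); case: (z \in S).
- by case/and4P => ? /eqP ? ? /eqP ?.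
- by move/eqP.
- by case => ? -> ? ->; rewrite !eqxx; apply/and4P.
- by move->.
Qed.

Lemma pmE (T : finType) (s : T -> T) (sK : involutive s) (sfp : forall z, s z != z)
  (x y : T) : y != x ->
  [/\ pm s x y x = y, pm s x y y = x, pm s x y (s x) = s y & pm s x y (s y) = s x].
Proof.
move=> Hxy; have sI := can_inj sK.
rewrite !ffunE eqxx (negbTE Hxy) eqxx (negbTE (sfp x)) eqxx (negbTE (sfp y)).
split => //.
- by case: eqP => // <-; rewrite sK.
- case: eqP => [<-|_]; first by rewrite sK.
  by case: eqP => // /sI /eqP; rewrite (negbTE Hxy).
Qed.

Lemma Qs_in (T : finType) (s : T -> T) x y z :
  (z \in Qs s x y) = [|| z == x, z == s x, z == y | z == s y].
Proof. by rewrite !inE. Qed.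

Lemma pm_props (T : finType) (s : T -> T) (sK : involutive s) (sfp : forall z, s z != z)
  (x y : T) : y != x -> forall z, z \in Qs s x y ->
  [/\ pm s x y z \in Qs s x y, pm s x y (pm s x y z) = z, pm s x y z != z,
      pm s x y (s z) = s (pm s x y z) & s z \in Qs s x y].
Proof.
move=> Hxy z; have [p1 p2 p3 p4] := pmE sK sfp Hxy; have sI := can_inj sK.
have Hyx : x != y by rewrite eq_sym.
have sxy : s x != s y by apply: contra Hyx => /eqP /sI ->.
have syx : s y != s x by rewrite eq_sym.
rewrite Qs_in => /or4P[] /eqP ->; rewrite ?p1 ?p2 ?p3 ?p4 ?sK ?p1 ?p2 ?p3 ?p4 !Qs_in !eqxx ?orbT //.
Qed.

Lemma glueE (T : finType) (Q : {set T}) (p d : {ffun T -> T}) z :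
  glue Q p d z = if z \in Q then p z else d z.
Proof. by rewrite ffunE. Qed.

Lemma card_fiber (T : finType) (s : T -> T) (sK : involutive s) (sfp : forall z, s z != z)
  (S : {set T}) (Scl : forall z, (s z \in S) = (z \in S)) x y :
  x \in S -> y \in S -> y != x ->
  #|[set d in FS s S | d x == y]| = #|FS s (S :\: Qs s x y)|.
Proof.
move=> xS yS Hxy.
set Q := Qs s x y; set p := pm s x y.
have Hp := pm_props sK sfp Hxy; have [p1 p2 p3 p4] := pmE sK sfp Hxy.
have QS : forall z, z \in Q -> z \in S.
  by move=> z; rewrite Qs_in => /or4P[] /eqP ->; rewrite ?Scl.
have SQcl : forall z, (s z \in S :\: Q) = (z \in S :\: Q).
  move=> z; rewrite !in_setD Scl; congr (~~ _ && _).
  apply/idP/idP => H.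
  - by have [_ _ _ _] := Hp _ H; rewrite sK.
  - by have [_ _ _ _ ->] := Hp _ H.
have glue_good : forall d', good s (S :\: Q) d' -> good s S (glue Q p d').
  move=> d' /goodP Hd'; apply/goodP => z; rewrite !glueE.
  case: (boolP (z \in Q)) => zQ.
  - have [pQ pp pne ps sQ] := Hp z zQ.
    by rewrite QS // pQ pp sQ ps; split => //; apply: QS.
  - move: (Hd' z); rewrite in_setD zQ /=.
    case: (boolP (z \in S)) => zS //.
    case=> /[dup] dzS; rewrite in_setD => /andP[dzQ dzS'] dd dne ds.
    rewrite (negbTE dzQ) dd ds; split => //.
    have : s z \notin Q by move: (SQcl z); rewrite !in_setD zS zQ andbT => /andP[].
    by move/negbTE ->.
have res_good : forall d, good s S d -> d x = y -> forall z, z \in Q -> d z = p z.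
  move=> d /goodP Hd dx.
  have dy : d y = x by move: (Hd x); rewrite xS => -[_ <- _ _]; rewrite dx.
  have dsx : d (s x) = s y by move: (Hd x); rewrite xS => -[_ _ _ ->]; rewrite dx.
  have dsy : d (s y) = s x by move: (Hd y); rewrite yS => -[_ _ _ ->]; rewrite dy.
  by move=> z; rewrite Qs_in => /or4P[] /eqP ->; rewrite /p ?dx ?dy ?dsx ?dsy ?p1 ?p2 ?p3 ?p4.
have eq : [set d in FS s S | d x == y] = glue Q p @: FS s (S :\: Q).
  apply/setP => d; apply/idP/idP.
  - rewrite !inE => /andP[Hd /eqP dx].
    have Hpd := res_good d Hd dx.
    apply/imsetP; exists [ffun z => if z \in Q then z else d z].
    + rewrite inE; move/goodP: Hd => Hd; apply/goodP => z; rewrite !ffunE in_setD.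
      case: (boolP (z \in Q)) => zQ //=.
      move: (Hd z); case: (boolP (z \in S)) => zS //= [dzS dd dne ds].
      have dzQ : d z \notin Q.
        apply/negP => dzQ; have [pQ _ _ _ _] := Hp _ dzQ.
        by move: zQ; rewrite -dd Hpd // pQ.
      have szQ : s z \notin Q by move: (SQcl z); rewrite !in_setD zS zQ andbT => /andP[].
      by rewrite (negbTE dzQ) in_setD dzQ dzS dd ds (negbTE szQ).
    + apply/ffunP => z; rewrite glueE; case: ifP => zQ; first by rewrite Hpd.
      by rewrite ffunE zQ.
  - case/imsetP => d' Hd' ->; rewrite !inE; apply/andP; split.
    + by apply: glue_good; move: Hd'; rewrite inE.
    + have xQ : x \in Q by rewrite Qs_in eqxx.
      by rewrite glueE xQ p1.
rewrite eq card_in_imset // => d1 d2; rewrite !inE => /goodP H1 /goodP H2 Heq.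
apply/ffunP => z; case: (boolP (z \in Q)) => zQ.
- by move: (H1 z) (H2 z); rewrite in_setD zQ /= => -> ->.
- by move/ffunP: Heq => /(_ z); rewrite !glueE (negbTE zQ).
Qed.

Lemma card_Qs (T : finType) (s : T -> T) (sK : involutive s) (sfp : forall z, s z != z)
  (S : {set T}) (Scl : forall z, (s z \in S) = (z \in S)) x y :
  x \in S -> y \in S -> y != x ->
  #|S :\: Qs s x y| + (if y == s x then 2 else 4) = #|S|.
Proof.
move=> xS yS Hxy; have sI := can_inj sK.
have QS : Qs s x y \subset S.
  by apply/subsetP => z; rewrite Qs_in => /or4P[] /eqP ->; rewrite ?Scl.
rewrite -(cardsID (Qs s x y) S) (setIidPr QS) addnC; congr (_ + _).
have n1 : (x == s x) = false by rewrite eq_sym (negbTE (sfp x)).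
have n2 : (s x == x) = false by rewrite (negbTE (sfp x)).
rewrite /Qs !cardsU1 cards1 !inE.
case: (y =P s x) => [->|ne]; first by rewrite sK eqxx n1 n2 eqxx.
have e1 : (x == y) = false by rewrite eq_sym (negbTE Hxy).
have e2 : (x == s y) = false by apply/eqP => H; apply: ne; rewrite H sK.
have e3 : (s x == y) = false by apply/eqP => H; apply: ne; rewrite H.
have e4 : (s x == s y) = false by apply/eqP => /sI H; move: Hxy; rewrite H eqxx.
have e5 : (y == s y) = false by rewrite eq_sym (negbTE (sfp y)).
by rewrite e1 e2 e3 e4 e5 n1.
Qed.

Lemma FS_sum (T : finType) (s : T -> T) (S : {set T}) x :
  x \in S -> #|FS s S| = \sum_(y in S :\ x) #|[set d in FS s S | d x == y]|.
Proof.
move=> xS.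
rewrite -sum1_card (partition_big (fun d : {ffun T -> T} => d x) (mem (S :\ x))).
- apply: eq_bigr => y _; rewrite -sum1_card; apply: eq_bigl => d.
  by rewrite !inE.
- move=> d; rewrite inE => /goodP /(_ x); rewrite xS => -[dS _ dne _].
  by rewrite !inE dne dS.
Qed.

Lemma SQ_closed (T : finType) (s : T -> T) (sK : involutive s) (sfp : forall z, s z != z)
  (S : {set T}) (Scl : forall z, (s z \in S) = (z \in S)) x y : y != x ->
  forall z, (s z \in S :\: Qs s x y) = (z \in S :\: Qs s x y).
Proof.
move=> Hxy z; have Hp := pm_props sK sfp Hxy.
rewrite !in_setD Scl; congr (~~ _ && _).
apply/idP/idP => H.
- by have [_ _ _ _] := Hp _ H; rewrite sK.
- by have [_ _ _ _ ->] := Hp _ H.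
Qed.

Lemma FS_card (T : finType) (s : T -> T) (sK : involutive s) (sfp : forall z, s z != z) :
  forall m (S : {set T}), (forall z, (s z \in S) = (z \in S)) -> #|S| = m.*2 ->
  #|FS s S| = a m.
Proof.
elim/ltn_ind => m IH S Scl HS.
case: m IH HS => [|k] IH HS.
- have S0 : S = set0 by apply/eqP; rewrite -cards_eq0 HS.
  have -> : FS s S = [set [ffun z => z]].
    apply/setP => d; rewrite !inE S0; apply/goodP/eqP => [H|->].
    + by apply/ffunP => z; rewrite ffunE; move: (H z); rewrite inE.
    + by move=> z; rewrite inE ffunE.
  by rewrite cards1.
- have [x xS] : exists x, x \in S by apply/card_gt0P; rewrite HS.
  have sI := can_inj sK.
  have sxS : s x \in S :\ x by rewrite !inE sfp Scl.
  rewrite (FS_sum s xS) (bigD1 (s x)) //=.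
  have sxS' : s x \in S by rewrite Scl.
  have Hsx : s x != x := sfp x.
  rewrite card_fiber // ?Scl //.
  have := card_Qs sK sfp Scl xS sxS' Hsx; rewrite eqxx HS => Hc.
  rewrite (IH k _ _ (SQ_closed sK sfp Scl Hsx)) //; last by lia.
  rewrite (eq_bigr (fun _ => a k.-1)); last first.
    move=> y; rewrite !inE => /andP[/andP[yx yS] ysx].
    have yx' : y != x := yx.
    rewrite card_fiber // (IH k.-1 _ _ (SQ_closed sK sfp Scl yx')) //; first by lia.
    have := card_Qs sK sfp Scl xS yS yx'; rewrite (negbTE ysx) HS; lia.
  rewrite (eq_bigl (mem (S :\ x :\ s x))); last first.
    by move=> y; rewrite !inE andbC.
  rewrite sum_nat_const.
  have Hc2 : #|S :\ x :\ s x| = k.*2.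
    move: HS; rewrite (cardsD1 x S) (cardsD1 (s x) (S :\ x)) xS sxS; lia.
  rewrite Hc2.
  case: k {IH HS Hc Hc2} => [|k] //.
  by rewrite -mul2n.
Qed.

Lemma card_sym n :
  #|[pred d : diagram n.*2 | is_sym_brauer d]| = a n.*2.
Proof.
set N := n.*2.
have sK : involutive (@refl_dot N) by case=> k b; rewrite /refl_dot /= rev_ordK.
have sfp : forall z, @refl_dot N z != z.
  case=> k b; apply/eqP => -[] /(congr1 val) /=.
  move=> Hk; have Hl := ltn_ord k; have HN : N = (n * 2)%N by rewrite /N -muln2.
  lia.
have Scl : forall z, (refl_dot z \in [set: dot N]) = (z \in [set: dot N]) by move=> z; rewrite !inE.
have HT : #|[set: dot N]| = N.*2 by rewrite cardsT card_prod card_ord card_bool -muln2.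
rewrite -(FS_card sK sfp Scl HT).
apply: eq_card => d; rewrite !inE; apply/idP/idP.
- case/andP => /forallP b /forallP sy; apply/forallP => z; rewrite in_setT.
  by rewrite in_setT sy andbT; exact: b z.
- move/forallP => H; apply/andP; split; apply/forallP => z; move: (H z); rewrite in_setT.
  + by case/and4P => _ -> ->.
  + by case/and4P.
Qed.


Local Open Scope ring_scope.

Lemma assemble N M (Hc : #|[pred d : diagram N | is_sym_brauer d]| = M)
  (R : comUnitRingType) (delta : R) :
  [/\ (forall f : elt R N, inSBr f -> inBr f) /\
      inSBr (bone R N),
      (forall f g : elt R N, inSBr f -> inSBr g -> inSBr (f + g)),
      (forall (c : R) (f : elt R N), inSBr f -> inSBr (c *: f)),
      (forall f g : elt R N, inSBr f -> inSBr g -> inSBr (bmul delta f g))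
    & exists b : 'I_M -> elt R N,
        [/\ (forall i, inSBr (b i)),
            (forall c : 'I_M -> R,
              \sum_i c i *: b i = 0 -> forall i, c i = 0)
          & (forall f : elt R N, inSBr f ->
              exists c : 'I_M -> R, f = \sum_i c i *: b i)]].
Proof.
have inS : forall f : elt R N, inSBr f -> forall d, ~~ is_sym_brauer d -> f d = 0.
  move=> f /forallP Hf d Hd; apply/eqP; apply: contraR Hd; exact: (implyP (Hf d)).
split.
- split.
  + move=> f /forallP Hf; apply/forallP => d; apply/implyP => /(implyP (Hf d)).
    by case/andP.
  + apply/forallP => d; rewrite ffunE; apply/implyP; case: (d =P id_diag N) => [-> _|]; last by rewrite eqxx.
    apply/andP; split; apply/forallP => x; rewrite !ffunE /= ?negbK.
    * by case: x => k [] /=; rewrite eqxx /=; apply/eqP => -[].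
    * by [].
- move=> f g Hf Hg; apply/forallP => d; apply/implyP; rewrite ffunE.
  case: (boolP (is_sym_brauer d)) => // Hd.
  by rewrite (inS f Hf d Hd) (inS g Hg d Hd) addr0 eqxx.
- move=> c f Hf; apply/forallP => d; apply/implyP; rewrite ffunE.
  case: (boolP (is_sym_brauer d)) => // Hd.
  by rewrite (inS f Hf d Hd) /= ?scaler0 ?mulr0 eqxx.
- move=> f g Hf Hg; apply/forallP => d; apply/implyP; rewrite ffunE.
  case: (boolP (is_sym_brauer d)) => // Hd.
  rewrite big1 ?eqxx // => d1 b1; rewrite big1 // => d2 b2.
  case: (boolP (is_sym_brauer d1)) => H1; last by rewrite (inS f Hf d1 H1) mul0r mulr0 mul0r.
  case: (boolP (is_sym_brauer d2)) => H2; last by rewrite (inS g Hg d2 H2) mulr0 mulr0 mul0r.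
  case: eqP => [Hd'|]; last by rewrite mul0r mul0r.
  by move: Hd; rewrite -Hd' conc_sym_brauer.
- set S := [pred d : diagram N | is_sym_brauer d] in Hc.
  pose e (i : 'I_M) : diagram N := enum_val (cast_ord (esym Hc) i).
  have e_inj : injective e.
    by move=> i j /enum_val_inj /cast_ord_inj.
  have eS : forall i, is_sym_brauer (e i).
    by move=> i; have := enum_valP (cast_ord (esym Hc) i).
  have e_sur : forall d, is_sym_brauer d -> exists i, d = e i.
    move=> d Hd; have Hd' : d \in S by [].
    exists (cast_ord Hc (enum_rank_in Hd' d)).
    by rewrite /e cast_ordK enum_rankK_in.
  pose b (i : 'I_M) : elt R N := [ffun d => ((d == e i)%:R : R)].
  have sumE : forall (c : 'I_M -> R) j, (\sum_i c i *: b i) (e j) = c j.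
    move=> c j; rewrite sum_ffunE (bigD1 j) //= big1 ?addr0.
      by rewrite !ffunE eqxx /=; exact: mulr1.
    move=> i Hij; rewrite !ffunE /=.
    case: eqP => [/e_inj Hji|]; last by rewrite ?scaler0 ?mulr0.
    by move: Hij; rewrite Hji eqxx.
  exists b; split.
  + move=> i; apply/forallP => d; apply/implyP; rewrite ffunE; case: (d =P e i) => [-> _|]; last by rewrite eqxx.
    exact: eS.
  + move=> c Hc0 i; by rewrite -(sumE c i) Hc0 ffunE.
  + move=> f Hf; exists (fun i => f (e i)); apply/ffunP => d.
    case: (boolP (is_sym_brauer d)) => Hd.
    * by have [i ->] := e_sur d Hd; rewrite sumE.
    * rewrite (inS f Hf d Hd) sum_ffunE big1 // => i _.
      rewrite !ffunE /=; case: eqP => [Hde|]; last by rewrite ?scaler0 ?mulr0.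
      by move: Hd; rewrite Hde eS.
Qed.

Unset Implicit Arguments.

Theorem mainTheorem2 (n : nat) (Hn : (1 <= n)%N) :
  #|[pred d : diagram n.*2 | is_sym_brauer d]| = a n.*2 /\
  forall (R : comUnitRingType) (delta : R), delta \is a GRing.unit ->
  [/\ (forall f : elt R n.*2, inSBr f -> inBr f) /\
      inSBr (bone R n.*2),
      (forall f g : elt R n.*2, inSBr f -> inSBr g -> inSBr (f + g)),
      (forall (c : R) (f : elt R n.*2), inSBr f -> inSBr (c *: f)),
      (forall f g : elt R n.*2, inSBr f -> inSBr g -> inSBr (bmul delta f g))
    & exists b : 'I_(a n.*2) -> elt R n.*2,
        [/\ (forall i, inSBr (b i)),
            (forall c : 'I_(a n.*2) -> R,
              \sum_i c i *: b i = 0 -> forall i, c i = 0)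
          & (forall f : elt R n.*2, inSBr f ->
              exists c : 'I_(a n.*2) -> R, f = \sum_i c i *: b i)]].
Proof.
split; first exact: card_sym.
move=> R delta _; exact: (assemble (card_sym n)).
Qed.
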